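(* For non-negative integers $p_1,p_2$, integers $k_0,k_1,k_2$ and $x_1,x_2,y,z\in\mathbb{C}$, $$\sum_{j_1=0}^{p_1}\sum_{j_2=0}^{p_2}\binom{p_1}{j_1}\binom{p_2}{j_2}B^{(k_1)}_{p_1-j_1}(x_1-y)B^{(k_2)}_{p_2-j_2}(x_2-y)B^{(k_0)}_{j_1+j_2}(y)=\sum_{j_1=0}^{p_1}\sum_{j_2=0}^{p_2}\binom{p_1}{j_1}\binom{p_2}{j_2}B^{(k_1)}_{p_1-j_1}(x_1-z)B^{(k_2)}_{p_2-j_2}(x_2-z)B^{(k_0)}_{j_1+j_2}(z).$$ In particular, for $x\in\mathbb{C}$, $$\sum_{j_1=0}^{p_1}\sum_{j_2=0}^{p_2}\binom{p_1}{j_1}\binom{p_2}{j_2}B^{(k_1)}_{p_1-j_1}B^{(k_2)}_{p_2-j_2}B^{(k_0)}_{j_1+j_2}(x)=\sum_{j_1=0}^{p_1}\sum_{j_2=0}^{p_2}\binom{p_1}{j_1}\binom{p_2}{j_2}B^{(k_1)}_{p_1-j_1}(x)B^{(k_2)}_{p_2-j_2}(x)B^{(k_0)}_{j_1+j_2}.$$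
   Context: For an integer $k$, a non-negative integer $n$ and $x\in\mathbb{C}$, the poly-Bernoulli polynomial is $B_{n}^{(k)}(x)=\sum_{l=0}^{n}\frac{1}{(l+1)^{k}}\sum_{j=0}^{l}(-1)^{j}\binom{l}{j}(j+x)^{n}$, and the poly-Bernoulli number is $B_n^{(k)}=B_n^{(k)}(0)$. *)

(* Defs.v *)
From mathcomp Require Import all_boot all_order all_algebra.
From mathcomp Require Export complex Rstruct.
Set Implicit Arguments. Unset Strict Implicit. Unset Printing Implicit Defensive.
Import Order.TTheory GRing.Theory Num.Theory.
Local Open Scope ring_scope.

Definition C : numClosedFieldType := (Rdefinitions.R)[i].

(* Poly-Bernoulli polynomial B_n^{(k)}(x), k : int (1/(l+1)^k with an integer power). *)
Definition polyBern (k : int) (n : nat) (x : C) : C :=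
  \sum_(l < n.+1) (((l.+1)%:R : C) ^ k)^-1 *
     \sum_(j < l.+1) (-1) ^+ j * ('C(l, j))%:R * (j%:R + x) ^+ n.

Definition polyBernNum (k : int) (n : nat) : C := polyBern k n 0.

(* Main.v *)
Require Import Defs.
From mathcomp Require Import all_boot all_order all_algebra.
From mathcomp Require Import ring zify.
Import GRing.Theory.
Local Open Scope ring_scope.

Definition Dl (l : nat) (f : nat -> C) : C :=
  \sum_(j < l.+1) (-1) ^+ j * ('C(l, j))%:R * f j.

Lemma Dl_S l f : Dl l.+1 f = Dl l f - Dl l (fun j => f j.+1).
Proof.
rewrite /Dl big_ord_recl /=.
under eq_bigr => i _ do rewrite /bump /= add1n binS natrD exprS mulrDr !mulrDl.
rewrite big_split /= big_ord_recr /= (@bin_small l l.+1) // bin0 mulr0 mul0r addr0.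
rewrite [\sum_(j < l.+1) (-1) ^+ j * 'C(l, j)%:R * f j]big_ord_recl /= bin0.
have -> : \sum_(i < l) (-1) ^+ bump 0 i * 'C(l, bump 0 i)%:R * f (bump 0 i) =
          \sum_(i < l) -1 * (-1) ^+ i * 'C(l, i.+1)%:R * f i.+1.
  by apply: eq_bigr => i _; rewrite /bump /= add1n exprS.
set S1 := \sum_(i < l) _.
set S2 := \sum_(i < l.+1) _.
set S3 := \sum_(i < l.+1) _.
have -> : S2 = - S3.
  rewrite /S2 /S3 -sumrN; apply: eq_bigr => i _; ring.
rewrite !expr0; ring.
Qed.

Lemma Dl_ext l f g : (forall j, f j = g j) -> Dl l f = Dl l g.
Proof. by move=> H; apply: eq_bigr => i _; rewrite H. Qed.

Lemma Dl_sum l m (F : nat -> nat -> C) :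
  Dl l (fun j => \sum_(i < m) F i j) = \sum_(i < m) Dl l (F i).
Proof.
rewrite /Dl exchange_big /=; apply: eq_bigr => j _; by rewrite mulr_sumr.
Qed.

Lemma Dl_scale l c f : Dl l (fun j => c * f j) = c * Dl l f.
Proof.
rewrite /Dl mulr_sumr; apply: eq_bigr => j _; ring.
Qed.

Lemma Dl_add l f g : Dl l (fun j => f j + g j) = Dl l f + Dl l g.
Proof. rewrite /Dl -big_split; apply: eq_bigr => j _ /=; ring. Qed.

Lemma Dl_pow n : forall l x, (n < l)%N -> Dl l (fun j => (j%:R + x) ^+ n) = 0.
Proof.
elim/ltn_ind: n => n IH [//|l] x Hl.
rewrite Dl_S.
have E : forall j : nat, ((j.+1)%:R + x) ^+ n = (j%:R + x) ^+ n +
     \sum_(i < n) ('C(n, i.+1))%:R * (j%:R + x) ^+ (n - i.+1).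
  move=> j; rewrite -addn1 natrD -addrA [1 + x]addrC addrA exprDn big_ord_recl /=.
  rewrite subn0 expr1n mulr1 bin0 mulr1n; congr (_ + _).
  by apply: eq_bigr => i _; rewrite expr1n mulr1 mulr_natl.
rewrite (@Dl_ext l _ _ E).
rewrite Dl_add (Dl_sum l n (fun i j => 'C(n, i.+1)%:R * (j%:R + x) ^+ (n - i.+1))).
rewrite big1 ?addr0 ?subrr //.
move=> i _.
rewrite (Dl_scale l _ (fun j => (j%:R + x) ^+ (n - i.+1))).
have Hi := ltn_ord i.
rewrite IH ?mulr0 //; lia.
Qed.

Lemma sum_widen m N (F : nat -> C) : (m <= N)%N ->
  (forall i, (m <= i < N)%N -> F i = 0) -> \sum_(i < m) F i = \sum_(i < N) F i.
Proof.
move=> HmN HF; rewrite (big_ord_widen _ F HmN) big_mkcond /=.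
apply: eq_bigr => i _; case: ifP => // /negbT; rewrite -leqNgt => H.
by rewrite HF // H ltn_ord.
Qed.

Definition cc (k : int) (l : nat) : C := (((l.+1)%:R : C) ^ k)^-1.
Definition ee (l j : nat) : C := (-1) ^+ j * ('C(l, j))%:R.

Lemma polyBern_N k n N x : (n < N)%N ->
  polyBern k n x = \sum_(l < N) cc k l * \sum_(j < N) ee l j * (j%:R + x) ^+ n.
Proof.
move=> HnN; rewrite /polyBern.
rewrite (@sum_widen _ N (fun l => cc k l * \sum_(j < l.+1) ee l j * (j%:R + x) ^+ n)) //.
  apply: eq_bigr => l _; congr (_ * _).
  apply: (@sum_widen _ N (fun j => ee l j * (j%:R + x) ^+ n)) => // i /andP [Hi _].
  by rewrite /ee bin_small // mulr0 mul0r.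
move=> l /andP [Hl _]; rewrite /ee.
have := Dl_pow n l x Hl; rewrite /Dl => ->; by rewrite mulr0.
Qed.

Lemma triple_id p1 p2 (a b c y : C) :
  \sum_(j1 < p1.+1) \sum_(j2 < p2.+1)
    ('C(p1, j1))%:R * ('C(p2, j2))%:R * (a - y) ^+ (p1 - j1) * (b - y) ^+ (p2 - j2)
    * (c + y) ^+ (j1 + j2)
  = (a + c) ^+ p1 * (b + c) ^+ p2.
Proof.
have -> : a + c = (a - y) + (c + y) by rewrite addrCA subrK addrC.
have -> : b + c = (b - y) + (c + y) by rewrite addrCA subrK addrC.
rewrite !exprDn big_distrl /=; apply: eq_bigr => j1 _.
rewrite big_distrr /=; apply: eq_bigr => j2 _.
rewrite exprD.
move: ((a - y) ^+ (p1 - j1)) ((b - y) ^+ (p2 - j2))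
  ((c + y) ^+ j1) ((c + y) ^+ j2) ('C(p1, j1)) ('C(p2, j2)) => v1 v2 w1 w2 n1 n2.
ring.
Qed.

Lemma expand3 (I : finType) (K : C) (A B D : I -> C) :
  K * (\sum_i A i) * (\sum_i B i) * (\sum_i D i) =
  \sum_i \sum_j \sum_k (K * A i * B j * D k).
Proof.
symmetry.
under eq_bigr => i _ do under eq_bigr => j _ do rewrite -mulr_sumr.
under eq_bigr => i _ do rewrite -(mulr_suml _ _ (fun j => K * A i * B j)) -(mulr_sumr _ _ B (K * A i)).
rewrite -mulr_suml -(mulr_suml _ _ (fun i => K * A i)) -(mulr_sumr _ _ A K) //.
Qed.

Lemma main_gen (I : finType) p1 p2 (w1 w2 w0 u1 u2 u0 : I -> C) x1 x2 y :
 \sum_(j1 < p1.+1) \sum_(j2 < p2.+1) ('C(p1, j1))%:R * ('C(p2, j2))%:R *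
   (\sum_q w1 q * (u1 q + (x1 - y)) ^+ (p1 - j1)) *
   (\sum_q w2 q * (u2 q + (x2 - y)) ^+ (p2 - j2)) *
   (\sum_q w0 q * (u0 q + y) ^+ (j1 + j2))
 = \sum_q1 \sum_q2 \sum_q0 (w1 q1 * w2 q2 * w0 q0 *
     ((u1 q1 + x1 + u0 q0) ^+ p1 * (u2 q2 + x2 + u0 q0) ^+ p2)).
Proof.
under eq_bigr => j1 _ do under eq_bigr => j2 _ do rewrite expand3.
under eq_bigr => j1 _ do rewrite exchange_big.
rewrite exchange_big; apply: eq_bigr => q1 _.
under eq_bigr => j1 _ do rewrite exchange_big.
rewrite exchange_big; apply: eq_bigr => q2 _.
under eq_bigr => j1 _ do rewrite exchange_big.
rewrite exchange_big; apply: eq_bigr => q0 _.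
rewrite -(triple_id p1 p2 _ _ _ y) mulr_sumr; apply: eq_bigr => j1 _.
rewrite mulr_sumr; apply: eq_bigr => j2 _.
rewrite !addrA.
move: (w1 q1) (w2 q2) (w0 q0) ((u1 q1 + x1 - y) ^+ (p1 - j1)) ((u2 q2 + x2 - y) ^+ (p2 - j2))
  ((u0 q0 + y) ^+ (j1 + j2)) ('C(p1, j1)) ('C(p2, j2)) => a1 a2 a3 b1 b2 b3 n1 n2.
ring.
Qed.

Lemma polyBern_pair k n N x : (n < N)%N ->
  polyBern k n x = \sum_(q : 'I_N * 'I_N) (cc k q.1 * ee q.1 q.2) * (q.2%:R + x) ^+ n.
Proof.
move=> H; rewrite (@polyBern_N k n N x H).

under eq_bigr => l _ do rewrite mulr_sumr.
rewrite pair_big /=; apply: eq_bigr => q _; by rewrite mulrA.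
Qed.

Definition SS (p1 p2 : nat) (k0 k1 k2 : int) (x1 x2 y : C) : C :=
    \sum_(j1 < p1.+1) \sum_(j2 < p2.+1)
      ('C(p1, j1))%:R * ('C(p2, j2))%:R *
      polyBern k1 (p1 - j1) (x1 - y) * polyBern k2 (p2 - j2) (x2 - y) *
      polyBern k0 (j1 + j2) y.

Lemma SS_indep p1 p2 k0 k1 k2 x1 x2 y z :
  SS p1 p2 k0 k1 k2 x1 x2 y = SS p1 p2 k0 k1 k2 x1 x2 z.
Proof.
pose N := (p1 + p2).+1.
have E : forall t, SS p1 p2 k0 k1 k2 x1 x2 t =
  \sum_(j1 < p1.+1) \sum_(j2 < p2.+1) ('C(p1, j1))%:R * ('C(p2, j2))%:R *
   (\sum_(q : 'I_N * 'I_N) (cc k1 q.1 * ee q.1 q.2) * (q.2%:R + (x1 - t)) ^+ (p1 - j1)) *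
   (\sum_(q : 'I_N * 'I_N) (cc k2 q.1 * ee q.1 q.2) * (q.2%:R + (x2 - t)) ^+ (p2 - j2)) *
   (\sum_(q : 'I_N * 'I_N) (cc k0 q.1 * ee q.1 q.2) * (q.2%:R + t) ^+ (j1 + j2)).
  move=> t; apply: eq_bigr => j1 _; apply: eq_bigr => j2 _.
  have h1 := ltn_ord j1; have h2 := ltn_ord j2.
  rewrite -!polyBern_pair //; rewrite /N; lia.
by rewrite !E !main_gen.
Qed.

Theorem mainTheorem10 (p1 p2 : nat) (k0 k1 k2 : int) :
  (forall x1 x2 y z : C,
    \sum_(j1 < p1.+1) \sum_(j2 < p2.+1)
      ('C(p1, j1))%:R * ('C(p2, j2))%:R *
      polyBern k1 (p1 - j1) (x1 - y) * polyBern k2 (p2 - j2) (x2 - y) *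
      polyBern k0 (j1 + j2) y
    =
    \sum_(j1 < p1.+1) \sum_(j2 < p2.+1)
      ('C(p1, j1))%:R * ('C(p2, j2))%:R *
      polyBern k1 (p1 - j1) (x1 - z) * polyBern k2 (p2 - j2) (x2 - z) *
      polyBern k0 (j1 + j2) z)
  /\
  (forall x : C,
    \sum_(j1 < p1.+1) \sum_(j2 < p2.+1)
      ('C(p1, j1))%:R * ('C(p2, j2))%:R *
      polyBernNum k1 (p1 - j1) * polyBernNum k2 (p2 - j2) *
      polyBern k0 (j1 + j2) x
    =
    \sum_(j1 < p1.+1) \sum_(j2 < p2.+1)
      ('C(p1, j1))%:R * ('C(p2, j2))%:R *
      polyBern k1 (p1 - j1) x * polyBern k2 (p2 - j2) x *
      polyBernNum k0 (j1 + j2)).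
Proof.
split.
  move=> x1 x2 y z; exact: (SS_indep p1 p2 k0 k1 k2 x1 x2 y z).
move=> x.
have := SS_indep p1 p2 k0 k1 k2 x x x 0.
rewrite /SS subrr subr0 /polyBernNum => ->. by [].
Qed.
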